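(* Consider the homophily-based model $X(t+1)=f_{\mathrm{HbM}}(X(t))$, $f_{\mathrm{HbM}}(X)=\operatorname{diag}(|X|\mathbf{1}_n)^{-1}XX^{\top}$. Let $Q_{\mathrm{HbM}}$ be the set of matrices $PYP^{\top}\in\mathcal{S}_{\mathrm{nz\text{-}row}}$ with $P$ a permutation matrix and $Y$ block diagonal with each diagonal block of the form $\alpha bb^{\top}$, $\alpha>0$, $b\in\{-1,+1\}^m$, $m\le n$. Then: (i) each element of $Q_{\mathrm{HbM}}$ of rank one is a locally stable fixed point of $f_{\mathrm{HbM}}$; (ii) for every $X(0)\in\mathcal{S}_{\mathrm{nz\text{-}row}}$, the following are equivalent: (a) the solution $X(t)$ satisfies the non-vanishing appraisal condition $\liminf_{t\to\infty}\min_{i,j}|X_{ij}(t)|>0$; (b) there exists $t_0>0$ such that $G(X(t))$ satisfies social balance for all $t\ge t_0$; (c) there exists $X^*\in Q_{\mathrm{HbM}}$ of rank one such that $\lim_{t\to\infty}X(t)=X^*$.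
   Context: $\mathcal{S}_{\mathrm{nz\text{-}row}}=\{X\in\mathbb{R}^{n\times n}:\text{every row of }X\text{ is non-zero}\}$; $|X|$ is entry-wise absolute value, $\mathbf{1}_n$ the all-ones vector. A fixed point $X^*$ of a map $f$ is locally stable if for every $\epsilon>0$ there is $\zeta>0$ such that $\max_{i,j}|X_{ij}(0)-X^*_{ij}|<\zeta$ implies $\max_{i,j}|X_{ij}(t)-X^*_{ij}|<\epsilon$ for all $t\ge0$, where $X(t+1)=f(X(t))$. $G(X)$ is the weighted digraph with adjacency matrix $X$; $G(X)$ satisfies social balance if $X_{ii}>0$ for all $i$ and $\operatorname{sign}(X_{ij})\operatorname{sign}(X_{jk})\operatorname{sign}(X_{ki})=1$ for all $i,j,k$. *)

(* Defs.v *)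
From HB Require Import structures.
From mathcomp Require Import all_boot all_order all_algebra all_fingroup.
From mathcomp Require Import all_classical all_reals all_analysis.
Set Implicit Arguments. Unset Strict Implicit. Unset Printing Implicit Defensive.
Import Order.TTheory GRing.Theory Num.Theory.
Import numFieldNormedType.Exports.
Local Open Scope ring_scope.

Section HbM.
Variable R : realType.
Variable n : nat.

Definition hbm_nz_row (X : 'M[R]_n) : Prop := forall i : 'I_n, row i X != 0.

Definition hbm_abs_row_sums (X : 'M[R]_n) : 'rV[R]_n := \row_i \sum_j `|X i j|.

Definition f_HbM (X : 'M[R]_n) : 'M[R]_n :=
  invmx (diag_mx (hbm_abs_row_sums X)) *m (X *m X^T).

Definition hbm_traj (X0 : 'M[R]_n) (t : nat) : 'M[R]_n := iter t f_HbM X0.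

Definition hbm_max_abs_dist (A B : 'M[R]_n) : R := \big[Num.max/0]_(i < n) \big[Num.max/0]_(j < n) `|A i j - B i j|.

Definition is_fixed_point (Xs : 'M[R]_n) : Prop := f_HbM Xs = Xs.

Definition locally_stable (Xs : 'M[R]_n) : Prop :=
  forall eps : R, 0 < eps -> exists zeta : R, 0 < zeta /\
    forall X0 : 'M[R]_n, hbm_max_abs_dist X0 Xs < zeta ->
      forall t : nat, hbm_max_abs_dist (hbm_traj X0 t) Xs < eps.

Definition in_Q_HbM (X : 'M[R]_n) : Prop :=
  hbm_nz_row X /\
  exists (k : nat) (p : 'I_k -> nat) (E : (\sum_(i < k) p i)%N = n)
         (alpha : 'I_k -> R) (b : forall i : 'I_k, 'cV[R]_(p i)) (s : 'S_n),
    (forall i, 0 < alpha i) /\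
    (forall i (l : 'I_(p i)), b i l ord0 = 1 \/ b i l ord0 = -1) /\
    X = perm_mx s *m castmx (E, E) (@mxdiag R k p (fun i => alpha i *: (b i *m (b i)^T)))
          *m (perm_mx s)^T.

(* min_{i,j} |X_ij| as an extended real (+oo for the empty matrix) *)
Definition hbm_min_abs (X : 'M[R]_n) : \bar R :=
  \big[Order.min/+oo%E]_(i < n) \big[Order.min/+oo%E]_(j < n) (`|X i j|)%:E.

Definition non_vanishing_appraisal (X : nat -> 'M[R]_n) : Prop :=
  (0 < limn_einf (fun t => hbm_min_abs (X t)))%E.

Definition social_balance (X : 'M[R]_n) : Prop :=
  (forall i, 0 < X i i) /\
  (forall i j k, Num.sg (X i j) * Num.sg (X j k) * Num.sg (X k i) = 1).

End HbM.

(* Main.v *)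
Require Import Defs.
From HB Require Import structures.
From mathcomp Require Import all_boot all_order all_algebra all_fingroup.
From mathcomp Require Import all_classical all_reals all_analysis.
Import Order.TTheory GRing.Theory Num.Theory.
Import numFieldNormedType.Exports.
From mathcomp Require Import ring lra.
Set Implicit Arguments. Unset Strict Implicit. Unset Printing Implicit Defensive.
Local Open Scope ring_scope.

Lemma invmx_diag_hbm (R : realType) n (d : 'rV[R]_n) :
  (forall i, d 0 i != 0) -> invmx (diag_mx d) = diag_mx (\row_i (d 0 i)^-1).
Proof.
move=> nz.
have H : diag_mx (\row_i (d 0 i)^-1) *m diag_mx d = 1%:M.
  rewrite mulmx_diag -diag_const_mx; congr diag_mx; apply/matrixP=> i j.
  by rewrite !mxE mulVf.
have [_ Ud] := mulmx1_unit H.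
by rewrite -[RHS]mulmx1 -(mulmxV Ud) mulmxA H mul1mx.
Qed.

Lemma fE (R : realType) n (X : 'M[R]_n) :
  (forall i, 0 < \sum_k `|X i k|) -> forall i j,
  f_HbM X i j = (\sum_k X i k * X j k) / \sum_k `|X i k|.
Proof.
move=> hX i j; rewrite /f_HbM invmx_diag_hbm; last first.
  by move=> k; rewrite /hbm_abs_row_sums mxE; apply: lt0r_neq0.
rewrite mul_diag_mx /hbm_abs_row_sums !mxE mulrC; congr (_ / _).
by apply: eq_bigr => k _; rewrite mxE.
Qed.

Definition gm (R : realType) n (c : 'I_n -> R) (X : 'M[R]_n) i j := c i * c j * X i j.

Definition sgn_vec (R : realType) n (c : 'I_n -> R) := forall i, c i = 1 \/ c i = -1.

Lemma sgn_sq (R : realType) n (c : 'I_n -> R) : sgn_vec c -> forall i, c i * c i = 1.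
Proof. by move=> hc i; case: (hc i) => ->; rewrite ?mulr1 ?mulrNN ?mulr1. Qed.

Lemma sgn_norm (R : realType) n (c : 'I_n -> R) : sgn_vec c -> forall i, `|c i| = 1.
Proof. by move=> hc i; case: (hc i) => ->; rewrite ?normrN normr1. Qed.

Lemma gm_norm (R : realType) n (c : 'I_n -> R) X : sgn_vec c -> forall i j,
  `|gm c X i j| = `|X i j|.
Proof. by move=> hc i j; rewrite /gm !normrM !(sgn_norm hc) !mul1r. Qed.

Lemma gfE (R : realType) n (c : 'I_n -> R) (X : 'M[R]_n) : sgn_vec c ->
  (forall j k, 0 < gm c X j k) -> forall i j,
  gm c (f_HbM X) i j = (\sum_k gm c X i k * gm c X j k) / \sum_k gm c X i k.
Proof.
move=> hc hpos i j.
have eabs : forall k, `|X i k| = gm c X i k.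
  by move=> k; rewrite -(gm_norm X hc) gtr0_norm.
have hX : forall i, 0 < \sum_k `|X i k|.
  move=> i0; rewrite (bigD1 i0) //=.
  have h1 : 0 < `|X i0 i0| by rewrite -(gm_norm X hc) gtr0_norm ?hpos.
  have h2 : 0 <= \sum_(k | k != i0) `|X i0 k| by rewrite sumr_ge0.
  lra.
rewrite {1}/gm fE //.
have -> : \sum_k `|X i k| = \sum_k gm c X i k by apply: eq_bigr => k _; exact: eabs.
rewrite mulrA; congr (_ / _); rewrite mulr_sumr; apply: eq_bigr => k _.
rewrite /gm; transitivity (c i * c j * (X i k * X j k) * (c k * c k)).
  by rewrite sgn_sq // mulr1.
by ring.
Qed.

Lemma sum_ge_term (R : realType) n (F : 'I_n -> R) i :
  (forall k, 0 <= F k) -> F i <= \sum_k F k.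
Proof.
move=> hF; rewrite (bigD1 i) //=.
have h2 : 0 <= \sum_(k | k != i) F k by rewrite sumr_ge0.
lra.
Qed.

Lemma sum_gt0_term (R : realType) n (F : 'I_n -> R) i :
  (forall k, 0 <= F k) -> 0 < F i -> 0 < \sum_k F k.
Proof. by move=> hF hi; apply: (lt_le_trans hi); apply: sum_ge_term. Qed.

Lemma wavg (R : realType) n (w v : 'I_n -> R) a b :
  (forall k, 0 <= w k) -> 0 < \sum_k w k -> (forall k, a <= v k <= b) ->
  a <= (\sum_k w k * v k) / \sum_k w k <= b.
Proof.
move=> hw hS hv; rewrite ler_pdivlMr // ler_pdivrMr //.
apply/andP; split.
- rewrite mulr_sumr; apply: ler_sum => k _; rewrite mulrC.
  by case/andP: (hv k) => h1 h2; rewrite ler_wpM2l.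
- rewrite mulr_sumr; apply: ler_sum => k _; rewrite [b * _]mulrC.
  by case/andP: (hv k) => h1 h2; rewrite ler_wpM2l.
Qed.

Lemma gstep (R : realType) n (c : 'I_n -> R) (X : 'M[R]_n) a b : sgn_vec c -> 0 < a ->
  (forall j k, a <= gm c X j k <= b) -> forall i j, a <= gm c (f_HbM X) i j <= b.
Proof.
move=> hc ha hab.
have hpos : forall j k, 0 < gm c X j k.
  by move=> j k; case/andP: (hab j k) => h1 _; exact: lt_le_trans h1.
move=> i j; rewrite gfE //; apply: wavg => //.
- by move=> k; apply: ltW.
- by apply: (@sum_gt0_term _ _ _ i) => // k; apply: ltW.
Qed.

Lemma traj_succ (R : realType) n (X0 : 'M[R]_n) t :
  hbm_traj X0 t.+1 = f_HbM (hbm_traj X0 t).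
Proof. by rewrite /hbm_traj iterS. Qed.

Lemma gtraj (R : realType) n (c : 'I_n -> R) (X0 : 'M[R]_n) a b t0 : sgn_vec c -> 0 < a ->
  (forall j k, a <= gm c (hbm_traj X0 t0) j k <= b) ->
  forall t, (t0 <= t)%N -> forall j k, a <= gm c (hbm_traj X0 t) j k <= b.
Proof.
move=> hc ha h0 t /subnKC <-; elim: (t - t0)%N => [|s IH]; first by rewrite addn0.
by rewrite addnS traj_succ; apply: gstep.
Qed.

Definition gpos (R : realType) n (X : 'M[R]_n) :=
  exists c : 'I_n -> R, sgn_vec c /\ forall i j, 0 < gm c X i j.

Lemma gpos_bounds (R : realType) n (c : 'I_n -> R) (X : 'M[R]_n) :
  (forall i j, 0 < gm c X i j) ->
  exists a b, 0 < a /\ forall j k, a <= gm c X j k <= b.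
Proof.
move=> hp.
exists (\big[Num.min/1]_j \big[Num.min/1]_k gm c X j k).
exists (\sum_j \sum_k gm c X j k).
split.
  apply/bigmin_gtP; split => [|j _]; first exact: ltr01.
  by apply/bigmin_gtP; split => [|k _]; [exact: ltr01|exact: hp].
move=> j k; apply/andP; split.
  have h1 : \big[Num.min/1]_j0 \big[Num.min/1]_k gm c X j0 k <= \big[Num.min/1]_k gm c X j k.
    exact: bigmin_le.
  have h2 : \big[Num.min/1]_k gm c X j k <= gm c X j k by exact: bigmin_le.
  exact: le_trans h1 h2.
apply: (le_trans (@sum_ge_term _ _ (fun k => gm c X j k) k _)).
  by move=> l; apply: ltW.
apply: (@sum_ge_term _ _ (fun j => \sum_k gm c X j k) j).
by move=> l; apply: sumr_ge0 => m _; apply: ltW.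
Qed.

Lemma gpos_forever (R : realType) n (X0 : 'M[R]_n) t0 :
  gpos (hbm_traj X0 t0) -> forall t, (t0 <= t)%N -> gpos (hbm_traj X0 t).
Proof.
case=> c [hc hp] t ht; exists c; split => //.
have [a [b [ha hab]]] := gpos_bounds hp.
move=> i j; have := gtraj hc ha hab ht i j; case/andP => h1 _.
exact: lt_le_trans h1.
Qed.

Lemma sg_sgn (R : realType) n (c : 'I_n -> R) : sgn_vec c -> forall i, Num.sg (c i) = c i.
Proof. by move=> hc i; case: (hc i) => ->; rewrite ?sgrN sgr1. Qed.

Lemma gauge_sb (R : realType) n (c : 'I_n -> R) (X : 'M[R]_n) : sgn_vec c ->
  (forall i j, 0 < gm c X i j) -> social_balance X.
Proof.
move=> hc hp.
have eX : forall i j, X i j = c i * c j * gm c X i j.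
  move=> i j; rewrite /gm; transitivity (c i * c i * (c j * c j) * X i j).
    by rewrite !sgn_sq // !mul1r.
  by ring.
have sX : forall i j, Num.sg (X i j) = c i * c j.
  move=> i j; have h := gtr0_sg (hp i j).
  rewrite /gm !sgrM !(sg_sgn hc) in h.
  transitivity (c i * c i * (c j * c j) * Num.sg (X i j)).
    by rewrite !(sgn_sq hc) !mul1r.
  transitivity (c i * c j * (c i * c j * Num.sg (X i j))); first by ring.
  by rewrite h mulr1.
split.
  by move=> i; have := hp i i; rewrite /gm (sgn_sq hc) mul1r.
move=> i j k; rewrite !sX.
transitivity ((c i * c i) * (c j * c j) * (c k * c k)); first by ring.
by rewrite !(sgn_sq hc) !mulr1.
Qed.

Lemma sg_sq1 (R : realType) (y : R) : y != 0 -> Num.sg y * Num.sg y = 1.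
Proof.
move=> hy; rewrite -sgrM gtr0_sg //.
by rewrite lt_def mulf_neq0 //= -expr2 sqr_ge0.
Qed.

Lemma sb_gauge (R : realType) n (hn : (0 < n)%N) (X : 'M[R]_n) :
  social_balance X -> gpos X.
Proof.
case=> hd ht; set i0 := Ordinal hn.
have nz : forall j, X i0 j != 0 /\ X j i0 != 0 /\ Num.sg (X i0 j) * Num.sg (X j i0) = 1.
  move=> j; have := ht i0 j i0; rewrite (gtr0_sg (hd i0)) mulr1 => e.
  split; last split => //.
    by apply/negP => /eqP h; move: e; rewrite h sgr0 mul0r => /eqP; rewrite eq_sym oner_eq0.
  by apply/negP => /eqP h; move: e; rewrite h sgr0 mulr0 => /eqP; rewrite eq_sym oner_eq0.
exists (fun j => Num.sg (X i0 j)); split.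
  move=> j; have [h _] := nz j.
  by case: (ltrgtP (X i0 j) 0) => hh; [right; rewrite ltr0_sg|left; rewrite gtr0_sg|move: h; rewrite hh eqxx].
move=> i j; rewrite /gm -sgr_gt0 !sgrM !sgr_id.
have [hj1 [_ hj2]] := nz j.
have := ht i0 i j => e.
have hu := sg_sq1 hj1.
have -> : Num.sg (X i0 i) * Num.sg (X i0 j) * Num.sg (X i j)
  = (Num.sg (X i0 i) * Num.sg (X i j) * Num.sg (X j i0)) * (Num.sg (X i0 j) * Num.sg (X i0 j)).
  by rewrite -[LHS]mulr1 -hj2; ring.
by rewrite e hu mulr1 ltr01.
Qed.

Lemma diag_block_entry (R : realType) k (p : 'I_k -> nat) (alpha : 'I_k -> R)
  (b : forall i : 'I_k, 'cV[R]_(p i)) (i i2 : 'I_k) (x : 'I_(p i)) (y : 'I_(p i2)) :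
  ((if i == i2 then conform_mx 0 (alpha i *: (b i *m (b i)^T)) else 0) : 'M[R]_(p i, p i2)) x y
  = if i == i2 then alpha i * b i x ord0 * b i2 y ord0 else 0.
Proof.
case: (eqVneq i i2) => [e|ne].
  subst i2; rewrite /= conform_mx_id !mxE big_ord1 !mxE mulrA //.
by rewrite /= mxE.
Qed.

Lemma Q_entries (R : realType) n (Xs : 'M[R]_n) : in_Q_HbM Xs ->
  exists k (blk : 'I_n -> 'I_k) (alpha : 'I_k -> R) (sig : 'I_n -> R),
    (forall b, 0 < alpha b) /\ sgn_vec sig /\
    forall u v, Xs u v = if blk u == blk v then alpha (blk u) * sig u * sig v else 0.
Proof.
case=> _ [k [p [E [alpha [b [s [ha [hb ->]]]]]]]].
pose u' (u : 'I_n) := cast_ord (esym E) (s u).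
exists k, (fun u => tagnat.sig1 (u' u)), alpha,
  (fun u => b (tagnat.sig1 (u' u)) (tagnat.sig2 (u' u)) ord0).
split => //; split.
  by move=> u; case: (hb (tagnat.sig1 (u' u)) (tagnat.sig2 (u' u))) => ->; [left|right].
move=> u v.
rewrite tr_perm_mx -row_permE -col_permE.
rewrite /col_perm /row_perm !mxE castmxE /=.
rewrite /mxdiag /mxblock mxE.
exact: diag_block_entry.
Qed.

Lemma rank1_factor (R : realType) n (hn : (0 < n)%N) (X : 'M[R]_n) : \rank X = 1%N ->
  exists a b : 'I_n -> R, forall i j, X i j = a i * b j.
Proof.
move=> hr; set i0 := Ordinal hn.
have eP : forall m l : 'I_n, (pid_mx 1 : 'M[R]_n) m l = ((m == i0) && (l == i0))%:R.
  move=> m l; rewrite mxE; congr (_%:R).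
  rewrite -[m == i0]val_eqE -[l == i0]val_eqE /=.
  by case: (nat_of_ord m) => [|m']; case: (nat_of_ord l) => [|l']; rewrite ?andbF.
have eQ : forall i l, (col_ebase X *m pid_mx 1) i l = col_ebase X i l * (l == i0)%:R.
  move=> i l; rewrite mxE (bigD1 i0) //= eP eqxx /= big1 ?addr0; last first.
    by move=> m hm; rewrite eP (negbTE hm) mulr0.
  by case: (eqVneq l i0) => [->|ne] //=; rewrite ?mulr0.
exists (fun i => col_ebase X i i0), (fun j => row_ebase X i0 j) => i j.
rewrite -{1}(mulmx_ebase X) hr mxE (bigD1 i0) //= eQ eqxx mulr1 big1 ?addr0 //.
by move=> l hl; rewrite eQ (negbTE hl) !mulr0 mul0r.
Qed.

Lemma Q_rank1 (R : realType) n (hn : (0 < n)%N) (Xs : 'M[R]_n) :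
  in_Q_HbM Xs -> \rank Xs = 1%N ->
  exists (A : R) (c : 'I_n -> R), 0 < A /\ sgn_vec c /\ forall i j, Xs i j = A * c i * c j.
Proof.
move=> hQ hr; have [k [blk [alpha [sig [ha [hs he]]]]]] := Q_entries hQ.
have [a [b hab]] := rank1_factor hn hr.
have same : forall u v, blk u = blk v.
  move=> u v; apply/eqP; apply/negP => /negP ne.
  have e1 : Xs u u * Xs v v = Xs u v * Xs v u by rewrite !hab; ring.
  move: e1; rewrite !he !eqxx (negbTE ne) eq_sym (negbTE ne) mulr0.
  have -> : alpha (blk u) * sig u * sig u * (alpha (blk v) * sig v * sig v)
     = alpha (blk u) * alpha (blk v) * (sig u * sig u) * (sig v * sig v) by ring.
  rewrite !(sgn_sq hs) !mulr1 => /eqP; rewrite mulf_eq0 !gt_eqF //.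
set i0 := Ordinal hn.
exists (alpha (blk i0)), sig; split => //; split => // i j.
by rewrite he (same i j) eqxx (same j i0).
Qed.

Lemma gm_inv (R : realType) n (c : 'I_n -> R) (X : 'M[R]_n) : sgn_vec c ->
  forall i j, X i j = c i * c j * gm c X i j.
Proof.
move=> hc i j; rewrite /gm; transitivity (c i * c i * (c j * c j) * X i j).
  by rewrite !(sgn_sq hc) !mul1r.
by ring.
Qed.

Lemma gm_dist (R : realType) n (c : 'I_n -> R) (X Y : 'M[R]_n) : sgn_vec c ->
  forall i j, `|gm c X i j - gm c Y i j| = `|X i j - Y i j|.
Proof.
move=> hc i j.
have -> : gm c X i j - gm c Y i j = c i * c j * (X i j - Y i j) by rewrite /gm; ring.
by rewrite !normrM !(sgn_norm hc) !mul1r.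
Qed.

Lemma dist_le (R : realType) n (X Y : 'M[R]_n) D : 0 <= D ->
  (forall i j, `|X i j - Y i j| <= D) -> hbm_max_abs_dist X Y <= D.
Proof.
move=> hD h; apply: bigmax_le => // i _; apply: bigmax_le => // j _; exact: h.
Qed.

Lemma entry_le_dist (R : realType) n (X Y : 'M[R]_n) i j :
  `|X i j - Y i j| <= hbm_max_abs_dist X Y.
Proof.
rewrite /hbm_max_abs_dist.
have h1 : `|X i j - Y i j| <= \big[Num.max/0]_(j0 < n) `|X i j0 - Y i j0|.
  exact: le_bigmax.
apply: (le_trans h1).
exact: (le_bigmax _ (fun i0 => \big[Num.max/0]_(j0 < n) `|X i0 j0 - Y i0 j0|) i).
Qed.

Lemma gm_const (R : realType) n (c : 'I_n -> R) (Xs : 'M[R]_n) A : sgn_vec c ->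
  (forall i j, Xs i j = A * c i * c j) -> forall i j, gm c Xs i j = A.
Proof.
move=> hc hX i j; rewrite /gm hX.
transitivity (A * (c i * c i) * (c j * c j)); first by ring.
by rewrite !(sgn_sq hc) !mulr1.
Qed.

Lemma rank1_fixed (R : realType) n (hn : (0 < n)%N) (Xs : 'M[R]_n) A (c : 'I_n -> R) :
  0 < A -> sgn_vec c -> (forall i j, Xs i j = A * c i * c j) -> is_fixed_point Xs.
Proof.
move=> hA hc hX; apply/matrixP => i j.
have hg := gm_const hc hX.
have hp : forall j k, 0 < gm c Xs j k by move=> j0 k0; rewrite hg.
rewrite (gm_inv (f_HbM Xs) hc) gfE // (gm_inv Xs hc i j).
congr (_ * _); rewrite hg.
rewrite (eq_bigr (fun _ => A * A)); last by move=> k _; rewrite !hg.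
rewrite [\sum_k gm c Xs i k](eq_bigr (fun _ => A)); last by move=> k _; rewrite hg.
rewrite !sumr_const card_ord -mulrnAr mulfK //.
by rewrite mulrn_eq0 negb_or -lt0n hn /= gt_eqF.
Qed.

Lemma rank1_stable (R : realType) n (Xs : 'M[R]_n) A (c : 'I_n -> R) :
  0 < A -> sgn_vec c -> (forall i j, Xs i j = A * c i * c j) -> locally_stable Xs.
Proof.
move=> hA hc hX eps heps.
have hg := gm_const hc hX.
exists (Num.min eps A); split; first by rewrite lt_min heps hA.
move=> X0 hd t.
set D := hbm_max_abs_dist X0 Xs in hd.
have hD0 : 0 <= D by exact: bigmax_ge_id.
move: hd; rewrite lt_min => /andP [hDe hDA].
have hb : forall j k, A - D <= gm c (hbm_traj X0 0) j k <= A + D.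
  move=> j k; have := entry_le_dist X0 Xs j k; rewrite -(gm_dist _ _ hc) (hg j k).
  rewrite /hbm_traj /= => h.
  have := ler_norml (gm c X0 j k - A) D; rewrite h => /esym /andP [h1 h2].
  apply/andP; split; lra.
have ha : 0 < A - D by lra.
have := gtraj hc ha hb (leq0n t) => hbt.
apply: (le_lt_trans _ hDe); apply: dist_le => // j k.
rewrite -(gm_dist _ _ hc) (hg j k).
have := hbt j k => /andP [h1 h2].
rewrite ler_norml; apply/andP; split; lra.
Qed.

Lemma lim_einf_ge (R : realType) (u : nat -> \bar R) (a : R) t0 : 0 < a ->
  (forall t, (t0 <= t)%N -> (a%:E <= u t)%E) -> (0 < limn_einf u)%E.
Proof.
move=> ha hu; rewrite limn_einf_lim.
have -> : limn (einfs u) = ereal_sup (range (einfs u)).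
  by apply/cvg_lim => //; exact: cvg_einfs_sup.
apply: (@lt_le_trans _ _ a%:E); first by rewrite lte_fin.
apply: (@le_trans _ _ (einfs u t0)).
  by apply: le_ereal_inf_tmp => _ [t /= ht <-]; exact: hu.
by apply: ereal_sup_ubound; exists t0.
Qed.

Lemma lim_einf_pos (R : realType) (u : nat -> \bar R) : (0 < limn_einf u)%E ->
  exists d : R, 0 < d /\ exists T, forall t, (T <= t)%N -> (d%:E <= u t)%E.
Proof.
rewrite limn_einf_lim.
have -> : limn (einfs u) = ereal_sup (range (einfs u)).
  by apply/cvg_lim => //; exact: cvg_einfs_sup.
move=> /ereal_sup_gt [_ [N _ <-] hN].
have hl : forall t, (N <= t)%N -> (einfs u N <= u t)%E.
  by move=> t ht; apply: ereal_inf_lbound; exists t.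
move: hN hl; case: (einfs u N) => [r| |] hN hl.
- exists r; split; first by rewrite lte_fin in hN.
  by exists N => t ht; exact: hl.
- exists 1; split => //; exists N => t ht; apply: le_trans (hl t ht); exact: leey.
- by move: hN; rewrite ltNge leNye.
Qed.

Definition mxa (R : realType) n (X : 'M[R]_n) := \big[Num.max/0]_i \big[Num.max/0]_j `|X i j|.

Lemma mxa_ge (R : realType) n (X : 'M[R]_n) i j : `|X i j| <= mxa X.
Proof.
rewrite /mxa.
have h1 : `|X i j| <= \big[Num.max/0]_(j0 < n) `|X i j0| by exact: le_bigmax.
apply: (le_trans h1).
exact: (le_bigmax _ (fun i0 => \big[Num.max/0]_(j0 < n) `|X i0 j0|) i).
Qed.

Lemma mxa_le (R : realType) n (X : 'M[R]_n) B : 0 <= B ->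
  (forall i j, `|X i j| <= B) -> mxa X <= B.
Proof.
move=> hB h; apply: bigmax_le => // i _; apply: bigmax_le => // j _; exact: h.
Qed.

Lemma f_abs_le (R : realType) n (Z : 'M[R]_n) B :
  (forall i, 0 < \sum_k `|Z i k|) -> (forall j k, `|Z j k| <= B) ->
  forall i j, `|f_HbM Z i j| <= B.
Proof.
move=> hr hB i j; rewrite fE // normrM normfV (gtr0_norm (hr i)) ler_pdivrMr //.
apply: (le_trans (ler_norm_sum _ _ _)).
rewrite mulr_sumr; apply: ler_sum => k _; rewrite normrM [B * _]mulrC.
by apply: ler_wpM2l => //; exact: hB.
Qed.

Lemma rowsum_pos (R : realType) n (Z : 'M[R]_n) d : 0 < d ->
  (forall j k, d <= `|Z j k|) -> forall i, 0 < \sum_k `|Z i k|.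
Proof.
move=> hd h i; apply: (@sum_gt0_term _ _ _ i) => // ; exact: (lt_le_trans hd).
Qed.

Lemma rowsum_le (R : realType) n (Z : 'M[R]_n) A :
  (forall j k, `|Z j k| <= A) -> forall i, \sum_k `|Z i k| <= n%:R * A.
Proof.
move=> h i; apply: (@le_trans _ _ (\sum_(k < n) A)).
  by apply: ler_sum => k _; exact: h.
by rewrite sumr_const card_ord mulr_natl.
Qed.

Lemma sg_sgnvec (R : realType) n (F : 'I_n -> R) : (forall k, F k != 0) ->
  sgn_vec (fun k => Num.sg (F k)).
Proof.
move=> h k; have := h k.
by case: (ltrgtP (F k) 0) => hh _; [right; rewrite ltr0_sg|left; rewrite gtr0_sg|move: (h k); rewrite hh eqxx].
Qed.

Lemma rank1sign_gpos (R : realType) n (Z : 'M[R]_n) (c tau : 'I_n -> R) :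
  sgn_vec c -> sgn_vec tau -> (forall k l, 0 < c k * tau l * Z k l) ->
  forall i k, 0 < gm c (f_HbM Z) i k.
Proof.
move=> hc ht hp i k.
have hr : forall i0, 0 < \sum_l `|Z i0 l|.
  move=> i0; apply: (@sum_gt0_term _ _ _ i0) => //.
  by have := hp i0 i0; rewrite normr_gt0; apply: contraTneq => ->; rewrite mulr0 ltxx.
rewrite /gm fE // mulrA; apply: divr_gt0 => //.
rewrite mulr_sumr.
rewrite (eq_bigr (fun l => (c i * tau l * Z i l) * (c k * tau l * Z k l))); last first.
  move=> l _; transitivity (c i * c k * (Z i l * Z k l) * (tau l * tau l)).
    by rewrite (sgn_sq ht) mulr1.
  by ring.
apply: (@sum_gt0_term _ _ _ i).
  by move=> l; apply: ltW; apply: mulr_gt0.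
exact: mulr_gt0.
Qed.

Lemma key_step (R : realType) n (Z : 'M[R]_n) (d A eta : R) :
  0 < d -> (forall j k, d <= `|Z j k| <= A) -> (forall j k, d <= `|f_HbM Z j k| <= A) ->
  eta * (n%:R * A) ^+ 2 <= 2 * d ^+ 3 ->
  forall i j, A - eta < `|f_HbM (f_HbM Z) i j| -> gpos (f_HbM Z).
Proof.
move=> hd hZ hY heta i j hW.
have hZl : forall j k, d <= `|Z j k| by move=> a b; case/andP: (hZ a b).
have hZu : forall j k, `|Z j k| <= A by move=> a b; case/andP: (hZ a b).
have hYl : forall j k, d <= `|f_HbM Z j k| by move=> a b; case/andP: (hY a b).
have hYu : forall j k, `|f_HbM Z j k| <= A by move=> a b; case/andP: (hY a b).
set Y := f_HbM Z in hY hW hYl hYu *.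
have rZ := rowsum_pos hd hZl.
have rY := rowsum_pos hd hYl.
have dZ := rowsum_le hZu.
have dY := rowsum_le hYu.
have hWA : `|f_HbM Y i j| <= A := f_abs_le rY hYu i j.
have hetap : 0 < eta by lra.
have hA : 0 < A by apply: (lt_le_trans hd); apply: (le_trans (hZl i i)); exact: hZu.
have hn : (0 < n)%N by apply: (leq_ltn_trans _ (ltn_ord i)).
have hnA : 0 < n%:R * A by rewrite mulr_gt0 // ltr0n.
have S1 : forall k0, d * (A - `|Y j k0|) < eta * (n%:R * A).
  move=> k0.
  set D := \sum_k `|Y i k|.
  have hD0 : 0 < D := rY i.
  have e : \sum_k `|Y i k| * (A - `|Y j k|) = A * D - \sum_k `|Y i k| * `|Y j k|.
    by rewrite /D mulr_sumr -sumrB; apply: eq_bigr => k _; ring.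
  have h1 : (A - eta) * D < \sum_k `|Y i k| * `|Y j k|.
    move: hW; rewrite (fE rY) normrM normfV (gtr0_norm hD0) ltr_pdivlMr // => h.
    apply: (lt_le_trans h); apply: (le_trans (ler_norm_sum _ _ _)).
    by apply: ler_sum => k _; rewrite normrM.
  have h2 : d * (A - `|Y j k0|) <= `|Y i k0| * (A - `|Y j k0|).
    by apply: ler_wpM2r; [rewrite subr_ge0; exact: hYu | exact: hYl].
  have h3 : `|Y i k0| * (A - `|Y j k0|) <= \sum_k `|Y i k| * (A - `|Y j k|).
    apply: (@sum_ge_term _ _ (fun k => `|Y i k| * (A - `|Y j k|))) => k.
    by apply: mulr_ge0 => //; rewrite subr_ge0.
  have h4 : eta * D <= eta * (n%:R * A) by apply: ler_wpM2l; [exact: ltW | exact: dY].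
  lra.
have S2 : forall k l, 0 < Y j k * Z j l * Z k l.
  move=> k l0; rewrite ltNge; apply/negP => hneg.
  set D := \sum_l `|Z j l|.
  have hD0 : 0 < D := rZ j.
  have hYne : Y j k != 0 by rewrite -normr_gt0; exact: (lt_le_trans hd (hYl j k)).
  have hs2 : Num.sg (Y j k) * Num.sg (Y j k) = 1 := sg_sq1 hYne.
  have hsn : `|Num.sg (Y j k)| = 1 by rewrite normr_sg hYne.
  have eY : `|Y j k| = Num.sg (Y j k) * Y j k.
    by rewrite -{3}(mulr_sg_norm (Y j k)) mulrA hs2 mul1r.
  have eYS : Y j k = (\sum_l Z j l * Z k l) / D by rewrite /Y (fE rZ).
  have hp0 : Num.sg (Y j k) * (Z j l0 * Z k l0) <= 0.
    have : `|Y j k| * (Num.sg (Y j k) * (Z j l0 * Z k l0)) <= 0.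
      rewrite eY.
      have -> : Num.sg (Y j k) * Y j k * (Num.sg (Y j k) * (Z j l0 * Z k l0))
         = Y j k * Z j l0 * Z k l0 * (Num.sg (Y j k) * Num.sg (Y j k)) by ring.
      by rewrite hs2 mulr1.
    by rewrite (pmulr_rle0 _ (lt_le_trans hd (hYl j k))).
  have hsum : Num.sg (Y j k) * \sum_l Z j l * Z k l
      <= \sum_l `|Z j l| * `|Z k l| - 2 * `|Z j l0 * Z k l0|.
    rewrite mulr_sumr (bigD1 l0) //= [in X in _ <= X - _](bigD1 l0) //=.
    have hrest : \sum_(l | l != l0) Num.sg (Y j k) * (Z j l * Z k l)
        <= \sum_(l | l != l0) `|Z j l| * `|Z k l|.
      apply: ler_sum => l _; rewrite -normrM; apply: (le_trans (ler_norm _)).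
      by rewrite (normrM (Num.sg (Y j k))) hsn mul1r.
    have hq : Num.sg (Y j k) * (Z j l0 * Z k l0) = - `|Z j l0 * Z k l0|.
      have e := ler0_norm hp0; rewrite (normrM (Num.sg (Y j k))) hsn mul1r in e.
      by rewrite e opprK.
    rewrite hq !normrM; lra.
  have hbound : \sum_l `|Z j l| * `|Z k l| <= A * D.
    rewrite /D mulr_sumr; apply: ler_sum => l _; rewrite [A * _]mulrC.
    by apply: ler_wpM2l => //; exact: hZu.
  have hp0l : d * d <= `|Z j l0 * Z k l0|.
    by rewrite normrM; apply: ler_pM => //; [exact: ltW | exact: ltW].
  have hYd : `|Y j k| * D = Num.sg (Y j k) * \sum_l Z j l * Z k l.
    rewrite eY eYS; field; exact: lt0r_neq0.
  have hx : 2 * (d * d) <= (A - `|Y j k|) * D by lra.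
  have hx0 : 0 <= A - `|Y j k| by rewrite subr_ge0; exact: hYu.
  have h1 : d * (2 * (d * d)) <= d * ((A - `|Y j k|) * D) := ler_wpM2l (ltW hd) hx.
  have h2 : d * (A - `|Y j k|) * D <= d * (A - `|Y j k|) * (n%:R * A).
    by apply: ler_wpM2l; [exact: mulr_ge0 (ltW hd) hx0 | exact: dZ].
  have h3 : d * (A - `|Y j k|) * (n%:R * A) < eta * (n%:R * A) * (n%:R * A).
    by rewrite ltr_pM2r //; exact: S1.
  have heta' : eta * ((n%:R * A) * (n%:R * A)) <= 2 * (d * (d * d)).
    by move: heta; rewrite !exprS expr0 !mulr1.
  lra.
exists (fun k => Num.sg (Y j k)); split.
  by apply: sg_sgnvec => k; rewrite -normr_gt0; exact: (lt_le_trans hd (hYl j k)).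
apply: (@rank1sign_gpos _ _ Z _ (fun l => Num.sg (Z j l))).
- by apply: sg_sgnvec => k; rewrite -normr_gt0; exact: (lt_le_trans hd (hYl j k)).
- by apply: sg_sgnvec => k; rewrite -normr_gt0; exact: (lt_le_trans hd (hZl j k)).
- move=> k l; rewrite -sgr_gt0 !sgrM !sgr_id -!sgrM sgr_gt0; exact: S2.
Qed.

Lemma a_to_b (R : realType) n (hn : (0 < n)%N) (X0 : 'M[R]_n) d T : 0 < d ->
  (forall t, (T <= t)%N -> forall i j, d <= `|hbm_traj X0 t i j|) ->
  exists s, gpos (hbm_traj X0 s).
Proof.
move=> hd hT.
case: (pselect (exists s, gpos (hbm_traj X0 s))) => [//|nf]; exfalso.
pose M t := mxa (hbm_traj X0 t).
set i0 := Ordinal hn.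
have Mlow : forall t, (T <= t)%N -> d <= M t.
  by move=> t ht; apply: (le_trans (hT t ht i0 i0)); exact: mxa_ge.
have Mmono : forall t, (T <= t)%N -> M t.+1 <= M t.
  move=> t ht; apply: mxa_le; first exact: (le_trans (ltW hd) (Mlow t ht)).
  rewrite traj_succ; apply: f_abs_le; first exact: (rowsum_pos hd (hT t ht)).
  by move=> j k; exact: mxa_ge.
have MB : forall t, (T <= t)%N -> M t <= M T.
  move=> t /subnKC <-; elim: (t - T)%N => [|s IH]; first by rewrite addn0.
  by rewrite addnS; apply: le_trans (Mmono _ (leq_addr _ _)) IH.
set B := M T.
have hB : d <= B := Mlow T (leqnn T).
have hnB : 0 < n%:R * B by rewrite mulr_gt0 // ?ltr0n //; exact: (lt_le_trans hd hB).
set eta := 2 * d ^+ 3 / (n%:R * B) ^+ 2.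
have heta0 : 0 < eta by rewrite divr_gt0 // ?exprn_gt0 // mulr_gt0 // exprn_gt0.
have dec : forall t, (T <= t)%N -> M t.+2 <= M t - eta.
  move=> t ht.
  have hent : forall i j, `|hbm_traj X0 t.+2 i j| <= M t - eta.
    move=> i j; rewrite leNgt; apply/negP => hlt; apply: nf; exists t.+1.
    rewrite traj_succ.
    apply: (@key_step _ _ (hbm_traj X0 t) d (M t) eta hd _ _ _ i j).
    - by move=> j0 k0; rewrite hT // mxa_ge.
    - move=> j0 k0; rewrite -traj_succ hT ?(leqW ht) //=.
      exact: (le_trans (mxa_ge _ _ _) (Mmono t ht)).
    - have h1 : (n%:R * M t) ^+ 2 <= (n%:R * B) ^+ 2.
        rewrite !expr2; apply: ler_pM.
        + by rewrite mulr_ge0 // (le_trans (ltW hd) (Mlow t ht)).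
        + by rewrite mulr_ge0 // (le_trans (ltW hd) (Mlow t ht)).
        + by apply: ler_wpM2l => //; exact: MB.
        + by apply: ler_wpM2l => //; exact: MB.
      apply: (le_trans (ler_wpM2l (ltW heta0) h1)).
      by rewrite /eta divfK // expf_neq0 // lt0r_neq0.
    - by rewrite -!traj_succ.
  apply: mxa_le => //; exact: (le_trans (normr_ge0 _) (hent i0 i0)).
have Mk : forall k, M (T + k.*2)%N <= B - k%:R * eta.
  elim => [|k IH]; first by rewrite addn0 mul0r subr0.
  have -> : (T + k.+1.*2 = (T + k.*2).+2)%N by rewrite doubleS !addnS.
  apply: (le_trans (dec _ (leq_addr _ _))).
  rewrite -addn1 natrD mulrDl mul1r; lra.
pose k := (Num.truncn (B / eta)).+1.
have hk : B < k%:R * eta by rewrite -ltr_pdivrMr //; exact: truncnS_gt.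
have := Mk k; have := Mlow (T + k.*2)%N (leq_addr _ _); lra.
Qed.

Lemma wavg_gap (R : realType) n (w e : 'I_n -> R) k0 a0 N rho :
  (forall k, 0 <= w k) -> (forall k, 0 <= e k) -> 0 < \sum_k w k -> \sum_k w k <= N ->
  a0 <= w k0 -> 0 <= rho -> rho * N = a0 ->
  rho * e k0 <= (\sum_k w k * e k) / \sum_k w k.
Proof.
move=> hw he hS hSN ha hr hrN; rewrite ler_pdivlMr //.
have h1 : rho * e k0 * \sum_k w k <= rho * e k0 * N.
  by apply: ler_wpM2l => //; exact: mulr_ge0.
have h2 : rho * e k0 * N = a0 * e k0 by rewrite -hrN; ring.
have h3 : a0 * e k0 <= w k0 * e k0 by apply: ler_wpM2r.
have h4 : w k0 * e k0 <= \sum_k w k * e k.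
  by apply: (@sum_ge_term _ _ (fun k => w k * e k)) => k; exact: mulr_ge0.
lra.
Qed.

Lemma avg_shift (R : realType) n (w v : 'I_n -> R) a : 0 < \sum_k w k ->
  (\sum_k w k * v k) / \sum_k w k - a = (\sum_k w k * (v k - a)) / \sum_k w k
  /\ a - (\sum_k w k * v k) / \sum_k w k = (\sum_k w k * (a - v k)) / \sum_k w k.
Proof.
move=> hS.
have e1 : \sum_k w k * (v k - a) = \sum_k w k * v k - a * \sum_k w k.
  by rewrite mulr_sumr -sumrB; apply: eq_bigr => k _; ring.
have e2 : \sum_k w k * (a - v k) = a * \sum_k w k - \sum_k w k * v k.
  by rewrite mulr_sumr -sumrB; apply: eq_bigr => k _; ring.
rewrite e1 e2; split; field; exact: lt0r_neq0.
Qed.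

Lemma one_step (R : realType) n (Z : 'M[R]_n) (c : 'I_n -> R) a b a0 b0 :
  sgn_vec c -> 0 < a0 -> a0 <= a -> b <= b0 ->
  (forall j k, a <= gm c Z j k <= b) -> forall i j k0,
  a0 / (n%:R * b0) * (gm c Z j k0 - a) <= gm c (f_HbM Z) i j - a /\
  a0 / (n%:R * b0) * (b - gm c Z j k0) <= b - gm c (f_HbM Z) i j.
Proof.
move=> hc ha0 haa hbb hab i j k0.
have hl : forall j k, a <= gm c Z j k by move=> x y; case/andP: (hab x y).
have hu : forall j k, gm c Z j k <= b by move=> x y; case/andP: (hab x y).
have hp : forall j k, 0 < gm c Z j k.
  by move=> x y; apply: (lt_le_trans ha0); apply: (le_trans haa); exact: hl.
have hn : (0 < n)%N by apply: (leq_ltn_trans _ (ltn_ord i)).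
have hb0 : 0 < b0 by apply: (lt_le_trans (hp i i)); apply: (le_trans (hu i i)).
have hnb : 0 < n%:R * b0 by rewrite mulr_gt0 // ltr0n.
have hS : 0 < \sum_k gm c Z i k by apply: (@sum_gt0_term _ _ _ i) => // k; exact: ltW.
have hSN : \sum_k gm c Z i k <= n%:R * b0.
  apply: (@le_trans _ _ (\sum_(k < n) b0)).
    by apply: ler_sum => k _; apply: (le_trans (hu i k)).
  by rewrite sumr_const card_ord mulr_natl.
have hr : 0 <= a0 / (n%:R * b0) by rewrite divr_ge0 // ltW.
have hrN : a0 / (n%:R * b0) * (n%:R * b0) = a0 by rewrite divfK // lt0r_neq0.
have [e1 _] := avg_shift (fun k => gm c Z j k) a hS.
have [_ e2] := avg_shift (fun k => gm c Z j k) b hS.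
rewrite gfE //; split.
- rewrite e1; apply: (wavg_gap (a0 := a0) (k0 := k0) (N := n%:R * b0) (w := fun k => gm c Z i k) (e := fun k => gm c Z j k - a)) => //.
  + by move=> k; exact: ltW.
  + by move=> k; rewrite subr_ge0.
  + by apply: (le_trans haa); exact: hl.
- rewrite e2; apply: (wavg_gap (a0 := a0) (k0 := k0) (N := n%:R * b0) (w := fun k => gm c Z i k) (e := fun k => b - gm c Z j k)) => //.
  + by move=> k; exact: ltW.
  + by move=> k; rewrite subr_ge0.
  + by apply: (le_trans haa); exact: hl.
Qed.

Lemma two_step (R : realType) n (hn : (0 < n)%N) (Z : 'M[R]_n) (c : 'I_n -> R) a b a0 b0 :
  sgn_vec c -> 0 < a0 -> a0 <= a -> b <= b0 ->
  (forall j k, a <= gm c Z j k <= b) -> forall i j,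
  a + (a0 / (n%:R * b0)) * (a0 / (n%:R * b0)) * (gm c Z (Ordinal hn) (Ordinal hn) - a)
    <= gm c (f_HbM (f_HbM Z)) i j <=
  b - (a0 / (n%:R * b0)) * (a0 / (n%:R * b0)) * (b - gm c Z (Ordinal hn) (Ordinal hn)).
Proof.
move=> hc ha0 haa hbb hab i j.
have ha : 0 < a by apply: (lt_le_trans ha0).
have hab1 := gstep hc ha hab.
have [l1 u1] := one_step hc ha0 haa hbb hab1 i j (Ordinal hn).
have [l2 u2] := one_step hc ha0 haa hbb hab j (Ordinal hn) (Ordinal hn).
have hb0 : 0 < b0.
  have := hab (Ordinal hn) (Ordinal hn) => /andP [x y]; apply: (lt_le_trans ha); apply: (le_trans x); exact: (le_trans y).
have hr : 0 <= a0 / (n%:R * b0) by rewrite divr_ge0 // ?ltW // mulr_gt0 // ltr0n.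
have l3 := ler_wpM2l hr l2.
have u3 := ler_wpM2l hr u2.
apply/andP; split; lra.
Qed.

Lemma sig2val (n : nat) (x : 'I_(\sum_(i < 1) (fun _ : 'I_1 => n) i)) :
  nat_of_ord (tagnat.sig2 x) = nat_of_ord x.
Proof.
have := congr1 (@nat_of_ord _) (tagnat.sig2K x).
rewrite /tagnat.Rank tagnat.rankEsum /= big1 ?add0n //.
by move=> i; rewrite [tagnat.sig1 x]ord1.
Qed.

Lemma Q_build (R : realType) n (hn : (0 < n)%N) (L : R) (c : 'I_n -> R) :
  0 < L -> sgn_vec c ->
  in_Q_HbM (\matrix_(i, j) (L * c i * c j)) /\ \rank (\matrix_(i, j) (L * c i * c j)) = 1%N.
Proof.
move=> hL hc.
have hent : forall i, (\matrix_(i, j) (L * c i * c j)) i i != 0.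
  by move=> i; rewrite mxE -mulrA (sgn_sq hc) mulr1 lt0r_neq0.
split.
  split.
    move=> i; apply/negP => /eqP h.
    have : (row i (\matrix_(i, j) (L * c i * c j))) 0 i = 0 by rewrite h mxE.
    rewrite !mxE => e; move: (hent i); rewrite mxE.

    by rewrite e eqxx.
  have E : (\sum_(i < 1) (fun _ : 'I_1 => n) i)%N = n by rewrite big_ord1.
  exists 1%N, (fun _ => n), E, (fun _ => L), (fun _ => \col_(l < n) c l), 1%g.
  split => //; split.
    by move=> i l; rewrite mxE; exact: hc.
  have e1 : forall x y : 'I_1, (x == y) = true by move=> x y; rewrite [x]ord1 [y]ord1 eqxx.
  have hs2 : forall x : 'I_n, tagnat.sig2 (cast_ord (esym E) x) = x :> 'I_n.
    by move=> x; apply: val_inj; rewrite /= sig2val.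
  apply/matrixP => u v.
  rewrite tr_perm_mx -row_permE -col_permE /col_perm /row_perm !mxE castmxE /=.
  rewrite /mxdiag /mxblock mxE e1 /= conform_mx_id !mxE big_ord1 !mxE !perm1.
  rewrite -mulrA; congr (L * (c _ * c _)); apply: val_inj => /=; by rewrite sig2val.
have eXs : \matrix_(i, j) (L * c i * c j) = (\col_i c i) *m (\row_j (L * c j)).
  by apply/matrixP => i j; rewrite !mxE big_ord1 !mxE; ring.
apply/eqP; rewrite eqn_leq; apply/andP; split.
  by rewrite eXs mulmx_max_rank.
rewrite lt0n mxrank_eq0; apply/negP => /eqP h.
by move: (hent (Ordinal hn)); rewrite h mxE eqxx.
Qed.

Lemma spread (R : realType) n (hn : (0 < n)%N) (X0 : 'M[R]_n) s (c : 'I_n -> R) a0 b0 :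
  sgn_vec c -> 0 < a0 -> (forall j k, a0 <= gm c (hbm_traj X0 s) j k <= b0) ->
  forall eps, 0 < eps -> exists N a b, b - a < eps /\ a0 <= a /\
    forall t, (N <= t)%N -> forall j k, a <= gm c (hbm_traj X0 t) j k <= b.
Proof.
move=> hc ha0 h0 eps heps.
set i0 := Ordinal hn.
have hb0 : 0 < b0.
  by have := h0 i0 i0 => /andP [x y]; apply: (lt_le_trans ha0); exact: (le_trans x y).
set rho := a0 / (n%:R * b0).
have hrho : 0 < rho by rewrite /rho divr_gt0 // mulr_gt0 // ltr0n.
set r2 := rho * rho.
have hr2 : 0 < r2 by rewrite /r2 mulr_gt0.
have P : forall k, exists a b, a0 <= a /\ b <= b0 /\
    (forall j l, a <= gm c (hbm_traj X0 (s + k.*2)) j l <= b) /\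
    (b - a <= (b0 - a0) - k%:R * (r2 * eps) \/ b - a < eps).
  elim => [|k [a [b [h1 [h2 [h3 h4]]]]]].
    exists a0, b0; rewrite addn0; split => //; split => //; split => //.
    by left; rewrite mul0r subr0.
  have ha : 0 < a by exact: (lt_le_trans ha0 h1).
  have -> : (s + k.+1.*2 = (s + k.*2).+2)%N by rewrite doubleS !addnS.
  have [hlt|hge] := ltP (b - a) eps.
    exists a, b; split => //; split => //; split; last by right.
    by apply: (gtraj hc ha h3); rewrite leqW.
  set Yv := gm c (hbm_traj X0 (s + k.*2)) i0 i0.
  have hY : a <= Yv <= b by exact: h3.
  case/andP: hY => hY1 hY2.
  exists (a + r2 * (Yv - a)), (b - r2 * (b - Yv)).
  have q1 : 0 <= r2 * (Yv - a) by apply: mulr_ge0; [exact: ltW | rewrite subr_ge0].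
  have q2 : 0 <= r2 * (b - Yv) by apply: mulr_ge0; [exact: ltW | rewrite subr_ge0].
  split; first lra.
  split; first lra.
  split.
    move=> j l; rewrite !traj_succ.
    exact: (two_step hn hc ha0 h1 h2 h3 j l).
  left.
  have h5 : b - a <= b0 - a0 - k%:R * (r2 * eps) by case: h4 => // h; lra.
  have h6 : r2 * eps <= r2 * (b - a) by rewrite ler_wpM2l // ltW.
  rewrite -addn1 natrD mulrDl mul1r.
  have -> : b - r2 * (b - Yv) - (a + r2 * (Yv - a)) = (b - a) - r2 * (b - a) by ring.
  lra.
pose K := (Num.truncn ((b0 - a0) / (r2 * eps))).+1.
have hK : b0 - a0 < K%:R * (r2 * eps).
  have hre : 0 < r2 * eps by rewrite mulr_gt0.
  by rewrite -ltr_pdivrMr //; exact: truncnS_gt.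
have [a [b [h1 [h2 [h3 h4]]]]] := P K.
have hab : a <= b by have := h3 i0 i0 => /andP [x y]; exact: le_trans x y.
have hsp : b - a < eps by case: h4 => // h; lra.
exists (s + K.*2)%N, a, b; split => //; split => //.
by apply: gtraj => //; exact: (lt_le_trans ha0 h1).
Qed.

Local Open Scope classical_set_scope.

Lemma b_to_c (R : realType) n (hn : (0 < n)%N) (X0 : 'M[R]_n) s :
  gpos (hbm_traj X0 s) ->
  exists Xs : 'M[R]_n, in_Q_HbM Xs /\ \rank Xs = 1%N /\ hbm_traj X0 @ \oo --> Xs.
Proof.
case=> c [hc hp]; have [a0 [b0 [ha0 hab]]] := gpos_bounds hp.
set i0 := Ordinal hn.
pose S := [set x : R | exists N, forall t, (N <= t)%N -> forall j l, x <= gm c (hbm_traj X0 t) j l].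
have hab0 := gtraj hc ha0 hab.
have hS0 : S a0.
  by exists s => t ht j l; have := hab0 t ht j l => /andP [].
have hub : has_ubound S.
  exists b0 => x [N hN].
  have := hN (maxn N s) (leq_maxl _ _) i0 i0.
  have := hab0 (maxn N s) (leq_maxr _ _) i0 i0 => /andP [_ y] z.
  exact: le_trans z y.
pose L := sup S.
have hL : forall eps, 0 < eps -> exists N, forall t, (N <= t)%N -> forall j l,
    `|gm c (hbm_traj X0 t) j l - L| < eps.
  move=> eps heps.
  have [N [a [b [hba [ha hN]]]]] := spread hn hc ha0 hab heps.
  have haL : a <= L.
    by apply: (ub_le_sup hub); exists N => t ht j l; case/andP: (hN t ht j l).
  have hLb : L <= b.
    apply: ge_sup; first by exists a0.
    move=> x [N' hN'].
    have := hN' (maxn N N') (leq_maxr _ _) i0 i0.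
    have := hN (maxn N N') (leq_maxl _ _) i0 i0 => /andP [_ y] z.
    exact: le_trans z y.
  exists N => t ht j l; have := hN t ht j l => /andP [x y].
  rewrite ltr_norml; apply/andP; split; lra.
have hL0 : 0 < L.
  by apply: (lt_le_trans ha0); exact: (ub_le_sup hub).
have [hQ hR] := Q_build hn hL0 hc.
exists (\matrix_(i, j) (L * c i * c j)); split => //; split => //.
apply/cvgrPdist_lt => e he.
have he2 : 0 < e / 2 by rewrite divr_gt0.
have [N hN] := hL _ he2.
near=> t.
have ht : (N <= t)%N by near: t; exists N.
have hg := gm_const (A := L) (Xs := \matrix_(i, j) (L * c i * c j)) hc.
change (mx_norm (\matrix_(i, j) (L * c i * c j) - hbm_traj X0 t) < e); rewrite mx_normrE; apply: (le_lt_trans (y := e / 2)); last by lra.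
apply: bigmax_le; first by lra.
move=> [i j] _ /=; rewrite !mxE.
have -> : L * c i * c j - hbm_traj X0 t i j = c i * c j * (L - gm c (hbm_traj X0 t) i j).
  rewrite {1}(gm_inv (hbm_traj X0 t) hc i j).
  set g := gm c (hbm_traj X0 t) i j; ring.
rewrite !normrM !(sgn_norm hc) !mul1r distrC.
by apply: ltW; exact: hN.
Unshelve. all: by end_near.
Qed.

Lemma c_to_b (R : realType) n (hn : (0 < n)%N) (X0 Xs : 'M[R]_n) :
  in_Q_HbM Xs -> \rank Xs = 1%N -> hbm_traj X0 @ \oo --> Xs ->
  exists s, gpos (hbm_traj X0 s).
Proof.
move=> hQ hr hcv; have [A [c [hA [hc hX]]]] := Q_rank1 hn hQ hr.
move/cvgrPdist_lt: hcv => /(_ A hA) hnear.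
have [N _ hN] := hnear.
have hN' := hN N (leqnn N).
exists N, c; split => // i j.
have hle : `|Xs i j - hbm_traj X0 N i j| < A.
  apply: (le_lt_trans _ hN').
  change (`|Xs i j - hbm_traj X0 N i j| <= mx_norm (Xs - hbm_traj X0 N)).
  rewrite mx_normrE.
  have -> : `|Xs i j - hbm_traj X0 N i j| = `|(Xs - hbm_traj X0 N) (i, j).1 (i, j).2| by rewrite !mxE.
  exact: (le_bigmax _ (fun ij : 'I_n * 'I_n => `|(Xs - hbm_traj X0 N) ij.1 ij.2|) (i, j)).
move: hle; rewrite -(gm_dist _ _ hc) (gm_const hc hX) ltr_norml => /andP [h1 h2].
lra.
Qed.

Unset Implicit Arguments.

Theorem theorem3p7 (R : realType) (n : nat) (hn : (0 < n)%N) :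
  (forall Xs : 'M[R]_n, in_Q_HbM Xs -> \rank Xs = 1%N ->
     is_fixed_point Xs /\ locally_stable Xs) /\
  (forall X0 : 'M[R]_n, hbm_nz_row X0 ->
     (non_vanishing_appraisal (hbm_traj X0) <->
        exists t0 : nat, (0 < t0)%N /\
          forall t : nat, (t0 <= t)%N -> social_balance (hbm_traj X0 t)) /\
     ((exists t0 : nat, (0 < t0)%N /\
          forall t : nat, (t0 <= t)%N -> social_balance (hbm_traj X0 t)) <->
      (exists Xs : 'M[R]_n, in_Q_HbM Xs /\ \rank Xs = 1%N /\
          hbm_traj X0 @ \oo --> Xs))).
Proof.
split.
  move=> Xs hQ hr; have [A [c [hA [hc hX]]]] := Q_rank1 hn hQ hr.
  split; [exact: (rank1_fixed hn hA hc hX) | exact: (rank1_stable hA hc hX)].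
move=> X0 _.
have bE : (exists t0 : nat, (0 < t0)%N /\
          forall t : nat, (t0 <= t)%N -> social_balance (hbm_traj X0 t))
          <-> exists s, gpos (hbm_traj X0 s).
  split.
    case=> t0 [_ h]; exists t0; apply: (sb_gauge hn); exact: h.
  case=> s hs; exists s.+1; split => // t ht.
  have [c [hc hp]] := gpos_forever hs (ltnW ht); exact: (gauge_sb hc hp).
split; split.
- move/lim_einf_pos => [d [hd [T hT]]]; apply/bE.
  apply: (a_to_b hn (d := d) (T := T)) => // t ht i j.
  have := hT t ht; rewrite /hbm_min_abs => /bigmin_geP [_ h1].
  have := h1 i isT => /bigmin_geP [_ h2].
  by rewrite -lee_fin; exact: h2 j isT.
- move/bE => [s [c [hc hp]]].
  have [a0 [b0 [ha0 hab]]] := gpos_bounds hp.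
  have hb := gtraj hc ha0 hab.
  apply: (lim_einf_ge (a := a0) (t0 := s)) => // t ht.
  apply: le_bigmin => [|i _]; first exact: leey.
  apply: le_bigmin => [|j _]; first exact: leey.
  rewrite lee_fin -(gm_norm _ hc).
  have := hb t ht i j => /andP [h1 _].
  apply: (le_trans h1); exact: ler_norm.
- by move/bE => [s hs]; exact: (b_to_c hn hs).
- by case=> Xs [hQ [hr hcv]]; apply/bE; exact: (c_to_b hn hQ hr hcv).
Qed.
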